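(* Let $n\ge 3$ and let $Q$ be the set of all faces of $\Delta_{n+1}$ of the form $A(F)$, $B(F)$, $C(F,S)$, $D(F,S)$ with $F$ a face of $\Delta_n$ and $S\in F$ (equivalently, the faces of $\Delta_{n+1}$ containing no vertex of the form $\{i,n+1\}$, $2\le i\le n$). Then $Q$ is a subcomplex of $\Delta_{n+1}$ and it is contractible.
   Context: The Whitehouse complex $\Delta_n$ ($n\ge 3$) is the simplicial complex with vertex set $V_n=\{S\subseteq\{2,\dots,n\}: 2\le |S|\le n-2\}$, in which a subset $F\subseteq V_n$ is a face iff for all $S,T\in F$ one has $S\subseteq T$, $T\subseteq S$, or $S\cap T=\emptyset$. (So $\Delta_3=\{\emptyset\}$.) For a face $F$ of $\Delta_n$: $A(F)=F$; $B(F)=F\cup\{\{2,\dots,n\}\}$; for $S\in F$, $C(F,S)=\{T\cup\{n+1\}: T\in F, S\subseteq T\}\cup\{T: T\in F, S\not\subseteq T\}$ and $D(F,S)=C(F,S)\cup\{S\}$. *)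

(* Defs.v *)
From HB Require Import structures.
From mathcomp Require Import all_boot all_order all_algebra.
From mathcomp Require Import reals Rstruct.
Set Implicit Arguments. Unset Strict Implicit. Unset Printing Implicit Defensive.
Import Order.TTheory GRing.Theory Num.Theory.

Notation Real := Rdefinitions.R.

(* Elements of {2,...,N} are represented in 'I_N.+1 (values 0..N), restricted
   to values >= 2. *)
Definition ground (N : nat) : {set 'I_N.+1} := [set i : 'I_N.+1 | 2 <= i].

Definition is_vertex (N : nat) (S : {set 'I_N.+1}) : bool :=
  [&& S \subset ground N, 2 <= #|S| & #|S| <= N - 2].
Arguments is_vertex N S : clear implicits.

Definition laminar_pair (T : finType) (S U : {set T}) : bool :=
  [|| S \subset U, U \subset S | [disjoint S & U]].

Definition is_face (N : nat) (F : {set {set 'I_N.+1}}) : bool :=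
  [forall S in F, is_vertex N S] &&
  [forall S in F, forall U in F, laminar_pair S U].
Arguments is_face N F : clear implicits.

Definition emb (n : nat) (S : {set 'I_n.+1}) : {set 'I_n.+2} :=
  [set widen_ord (leqnSn n.+1) i | i in S].
Definition embF (n : nat) (F : {set {set 'I_n.+1}}) : {set {set 'I_n.+2}} :=
  [set emb S | S in F].

Definition top (n : nat) : 'I_n.+2 := ord_max.

Definition Aface (n : nat) (F : {set {set 'I_n.+1}}) : {set {set 'I_n.+2}} :=
  embF F.
Definition Bface (n : nat) (F : {set {set 'I_n.+1}}) : {set {set 'I_n.+2}} :=
  emb (ground n) |: embF F.
Definition Cface (n : nat) (F : {set {set 'I_n.+1}}) (S : {set 'I_n.+1})
  : {set {set 'I_n.+2}} :=
  [set (if S \subset T then top n |: emb T else emb T) | T : {set 'I_n.+1} in F].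
Definition Dface (n : nat) (F : {set {set 'I_n.+1}}) (S : {set 'I_n.+1})
  : {set {set 'I_n.+2}} :=
  emb S |: Cface F S.

Definition inQ (n : nat) (G : {set {set 'I_n.+2}}) : Prop :=
  exists F : {set {set 'I_n.+1}}, is_face n F /\
    (G = Aface F \/ G = Bface F \/
     exists2 S, S \in F & (G = Cface F S \/ G = Dface F S)).

Definition subcomplex (V : finType) (K L : {set V} -> Prop) : Prop :=
  (forall G, K G -> L G) /\ (forall G H : {set V}, K G -> H \subset G -> K H).

Local Open Scope ring_scope.

Definition realization (V : finType) (K : {set V} -> Prop) (x : V -> Real) : Prop :=
  (forall v, 0 <= x v) /\ \sum_(v : V) x v = 1 /\ K [set v | x v != 0].

(* X subset of R^V (product / sup-norm topology) is contractible *)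
Definition contractible (V : finType) (X : (V -> Real) -> Prop) : Prop :=
  exists (x0 : V -> Real) (H : (V -> Real) -> Real -> (V -> Real)),
    X x0 /\
    (forall x t, X x -> 0 <= t <= 1 -> X (H x t)) /\
    (forall x, X x -> H x 0 = x /\ H x 1 = x0) /\
    (forall x t, X x -> 0 <= t <= 1 -> forall e : Real, 0 < e ->
       exists2 d : Real, 0 < d &
         forall y s, X y -> 0 <= s <= 1 ->
           (forall v, `|y v - x v| < d) -> `|s - t| < d ->
           forall v, `|H y s v - H x t v| < e).

(* Main.v *)
Require Import Defs.
From mathcomp Require Import all_boot all_order all_algebra reals Rstruct lra ring zify.
From Stdlib Require Import FunctionalExtensionality.
Set Implicit Arguments. Unset Strict Implicit. Unset Printing Implicit Defensive.
Import Order.TTheory GRing.Theory Num.Theory.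

Definition wid (n : nat) : 'I_n.+1 -> 'I_n.+2 := widen_ord (leqnSn n.+1).

Lemma wid_inj n : injective (@wid n).
Proof. by move=> i j /(congr1 val) /= /val_inj. Qed.

Lemma mem_emb n (T : {set 'I_n.+1}) i : (wid i \in emb T) = (i \in T).
Proof. by rewrite /emb mem_imset //; exact: wid_inj. Qed.

Lemma embP n (T : {set 'I_n.+1}) x : x \in emb T -> exists2 i, i \in T & x = wid i.
Proof. by case/imsetP=> i Hi ->; exists i. Qed.

Lemma wid_neq_top n (i : 'I_n.+1) : wid i != top n.
Proof. by rewrite -val_eqE /= neq_ltn ltn_ord. Qed.

Lemma top_notin_emb n (T : {set 'I_n.+1}) : top n \notin emb T.
Proof. by apply/negP=> /embP [i _ /eqP]; rewrite eq_sym (negbTE (wid_neq_top i)). Qed.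

Lemma wid_surj n (x : 'I_n.+2) : x != top n -> exists i, x = wid i.
Proof.
move=> hx; have lx : x < n.+1.
  by move: hx (ltn_ord x); rewrite -val_eqE /= ltnS leq_eqVlt => /negbTE ->.
by exists (Ordinal lx); apply/val_inj.
Qed.

Lemma emb_sub n (A B : {set 'I_n.+1}) : (emb A \subset emb B) = (A \subset B).
Proof.
apply/subsetP/subsetP => H x.
  by move=> hx; rewrite -mem_emb; apply: H; rewrite mem_emb.
by case/embP=> i hi ->; rewrite mem_emb; apply: H.
Qed.

Lemma emb_disj n (A B : {set 'I_n.+1}) : [disjoint emb A & emb B] = [disjoint A & B].
Proof. by apply: imset_disjoint; exact: wid_inj. Qed.

Lemma emb_card n (A : {set 'I_n.+1}) : #|emb A| = #|A|.
Proof. by apply: card_imset; exact: wid_inj. Qed.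

Lemma emb_lam n (A B : {set 'I_n.+1}) : laminar_pair (emb A) (emb B) = laminar_pair A B.
Proof. by rewrite /laminar_pair !emb_sub emb_disj. Qed.

Lemma emb_inj n : injective (@emb n).
Proof.
move=> A B h; apply/eqP; rewrite eqEsubset -(emb_sub A B) -(emb_sub B A) h; by rewrite subxx.
Qed.

Lemma lam_sym (T : finType) (A B : {set T}) : laminar_pair A B = laminar_pair B A.
Proof. by rewrite /laminar_pair orbA (orbC (A \subset B)) -orbA disjoint_sym. Qed.

Lemma mem_ground N (i : 'I_N.+1) : (i \in ground N) = (2 <= i).
Proof. by rewrite inE. Qed.

Lemma emb_ground_sub n (A : {set 'I_n.+1}) : (emb A \subset ground n.+1) = (A \subset ground n).
Proof.
apply/subsetP/subsetP => H x.
  by move=> hx; have := H _ (introT idP (etrans (mem_emb A x) hx)); rewrite !inE.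
by case/embP=> i hi ->; have := H _ hi; rewrite !inE.
Qed.

Lemma top_ground n : 1 <= n -> top n \in ground n.+1.
Proof. by move=> hn; rewrite inE /=. Qed.

(* the cone vertex *)
Definition v0 n : {set 'I_n.+2} := emb (ground n).

Lemma card_ground N : #|ground N| = N.-1.
Proof.
have hf : forall i : 'I_N.-1, i.+2 < N.+1.
  move=> [i hi] /=; lia.
pose f (i : 'I_N.-1) : 'I_N.+1 := Ordinal (hf i).
have finj : injective f by move=> i j /(congr1 val) /= [] /val_inj.
have -> : ground N = f @: [set: 'I_N.-1].
  apply/setP=> x; rewrite inE; apply/idP/imsetP.
    move=> hx; have hx' : x - 2 < N.-1.
      have := ltn_ord x; move: hx; clear; lia.
    by exists (Ordinal hx') => //; apply/val_inj => /=; lia.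
  by case=> i _ ->.
by rewrite card_imset // cardsT card_ord.
Qed.

Lemma disjP (T : finType) (A B : {set T}) : reflect (forall x, x \in A -> x \in B -> False) [disjoint A & B].
Proof.
rewrite disjoints_subset; apply: (iffP subsetP) => H x hx.
  by move=> hb; have := H x hx; rewrite inE hb.
by rewrite inE; apply/negP => /(H x hx).
Qed.

Lemma is_faceP N (F : {set {set 'I_N.+1}}) :
  is_face N F <-> (forall S, S \in F -> is_vertex N S) /\
                  (forall S U, S \in F -> U \in F -> laminar_pair S U).
Proof.
rewrite /is_face; split.
  case/andP=> /forallP H1 /forallP H2; split=> [S hS|S U hS hU].
    exact: (implyP (H1 S) hS).
  exact: (implyP (forallP (implyP (H2 S) hS) U) hU).
case=> H1 H2; apply/andP; split; apply/forallP=> S; apply/implyP=> hS.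
  exact: H1.
by apply/forallP=> U; apply/implyP=> hU; exact: H2.
Qed.

Definition noedge n (G : {set {set 'I_n.+2}}) :=
  forall i : 'I_n.+2, 2 <= i <= n -> [set i; top n] \notin G.

Lemma vert_emb n T : is_vertex n T -> is_vertex n.+1 (@emb n T).
Proof.
case/and3P=> h1 h2 h3; apply/and3P; rewrite emb_ground_sub emb_card; split => //; lia.
Qed.

Lemma sub_top_emb n (T : {set 'I_n.+1}) : emb T \subset top n |: emb T.
Proof. by apply/subsetP=> x hx; rewrite setU1r. Qed.

Lemma card_top_emb n (T : {set 'I_n.+1}) : #|top n |: emb T| = #|T|.+1.
Proof. by rewrite cardsU1 top_notin_emb emb_card. Qed.

Lemma vert_top n T : 2 <= n -> is_vertex n T -> is_vertex n.+1 (top n |: @emb n T).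
Proof.
move=> hn; case/and3P=> h1 h2 h3; apply/and3P; rewrite card_top_emb; split; try lia.
apply/subsetP=> x; rewrite in_setU1 => /orP[/eqP->|hx]; first by rewrite top_ground //; lia.
by rewrite -emb_ground_sub in h1; exact: (subsetP h1).
Qed.

Lemma vert_v0 n : 3 <= n -> is_vertex n.+1 (v0 n).
Proof.
move=> hn; apply/and3P; rewrite /v0 emb_ground_sub emb_card card_ground subxx; split => //; lia.
Qed.



Lemma noedgeI n (G : {set {set 'I_n.+2}}) :
  (forall W, W \in G -> top n \in W -> 3 <= #|W|) -> noedge G.
Proof.
move=> H i /andP[_ hi]; apply/negP=> hW.
have ht : top n \in [set i; top n] by rewrite !inE eqxx orbT.
by have := H _ hW ht; rewrite cards2; case: (i != top n).
Qed.

Lemma lam_mixed n (S T1 T2 : {set 'I_n.+1}) : S \subset T1 -> ~~ (S \subset T2) ->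
  laminar_pair T1 T2 -> laminar_pair (top n |: emb T1) (emb T2).
Proof.
move=> h1 h2; case/or3P=> [h|h|h].
- by rewrite (subset_trans h1 h) in h2.
- apply/or3P; apply: Or32; apply: subset_trans (sub_top_emb _).
  by rewrite emb_sub.
- apply/or3P; apply: Or33; apply/disjP => x; rewrite in_setU1 => /orP[/eqP->|hx] hy.
    by rewrite (negbTE (top_notin_emb _)) in hy.
  rewrite -emb_disj in h; exact: (disjP _ _ h x hx hy).
Qed.

Lemma lam_both n (S T1 T2 : {set 'I_n.+1}) : (exists s, s \in S) -> S \subset T1 -> S \subset T2 ->
  laminar_pair T1 T2 -> laminar_pair (top n |: emb T1) (top n |: emb T2).
Proof.
move=> [s hs] h1 h2; case/or3P=> [h|h|h].
- by apply/or3P; apply: Or31; apply: setUS; rewrite emb_sub.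
- by apply/or3P; apply: Or32; apply: setUS; rewrite emb_sub.
- by case: (disjP _ _ h s (subsetP h1 s hs) (subsetP h2 s hs)).
Qed.

Definition Xf n (S T : {set 'I_n.+1}) : {set 'I_n.+2} :=
  if S \subset T then top n |: emb T else emb T.

Lemma CfaceE n F S : @Cface n F S = Xf S @: F.
Proof. by []. Qed.

Lemma lamX n (S T1 T2 : {set 'I_n.+1}) : (exists s, s \in S) ->
  laminar_pair T1 T2 -> laminar_pair (Xf S T1) (Xf S T2).
Proof.
move=> hs hl; rewrite /Xf; case: ifP => h1; case: ifP => h2.
- exact: lam_both hs h1 h2 hl.
- by apply: lam_mixed h1 _ hl; rewrite h2.
- by rewrite lam_sym; apply: lam_mixed h2 _ _; rewrite ?h1 // lam_sym.
- by rewrite emb_lam.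
Qed.

Lemma face_ext N (A : {set 'I_N.+1}) (G : {set {set 'I_N.+1}}) :
  is_face N G -> is_vertex N A -> (forall W, W \in G -> laminar_pair A W) ->
  is_face N (A |: G).
Proof.
case/is_faceP=> H1 H2 hA hl; apply/is_faceP; split.
  by move=> S; rewrite in_setU1 => /orP[/eqP->|]; [|exact: H1].
move=> S U; rewrite !in_setU1 => /orP[/eqP->|hS] /orP[/eqP->|hU].
- by rewrite /laminar_pair subxx.
- exact: hl.
- by rewrite lam_sym; exact: hl.
- exact: H2.
Qed.

Lemma noedge_ext n (T : {set 'I_n.+1}) G : noedge G -> noedge (emb T |: G).
Proof.
move=> H i hi; rewrite in_setU1 (negbTE (H i hi)) orbF; apply/negP=> /eqP he.
have : top n \in [set i; top n] by rewrite !inE eqxx orbT.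
by rewrite he (negbTE (top_notin_emb _)).
Qed.

Lemma face_vertex_ne n (F : {set {set 'I_n.+1}}) S : is_face n F -> S \in F -> exists s, s \in S.
Proof.
case/is_faceP=> H1 _ hS; case/and3P: (H1 S hS) => _ h2 _.
by apply/card_gt0P; lia.
Qed.

Lemma C_face n (hn : 3 <= n) F S : is_face n F -> S \in F ->
  is_face n.+1 (Cface F S) /\ noedge (Cface F S).
Proof.
move=> hF hS; have hs := face_vertex_ne hF hS; case/is_faceP: hF => H1 H2.
rewrite CfaceE; split; last first.
  apply: noedgeI => W /imsetP [T hT ->]; rewrite /Xf; case: ifP => h.
    by rewrite card_top_emb; case/and3P: (H1 T hT) => _ ? _; lia.
  by rewrite (negbTE (top_notin_emb _)).
apply/is_faceP; split.
  move=> W /imsetP [T hT ->]; rewrite /Xf; case: ifP => _.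
    by apply: vert_top; [lia| exact: H1].
  exact: vert_emb (H1 T hT).
move=> W U /imsetP [T1 h1 ->] /imsetP [T2 h2 ->]; exact: lamX hs (H2 _ _ h1 h2).
Qed.

Lemma D_face n (hn : 3 <= n) F S : is_face n F -> S \in F ->
  is_face n.+1 (Dface F S) /\ noedge (Dface F S).
Proof.
move=> hF hS; have [hC1 hC2] := C_face hn hF hS; case/is_faceP: (hF) => H1 H2.
split; last exact: noedge_ext.
apply: face_ext => //; first exact: vert_emb (H1 S hS).
rewrite CfaceE => W /imsetP [T hT ->]; rewrite /Xf; case: ifP => h.
  by apply/or3P; apply: Or31; apply: subset_trans (sub_top_emb _); rewrite emb_sub.
by rewrite emb_lam; exact: H2.
Qed.

Lemma A_face n F : is_face n F -> is_face n.+1 (Aface F) /\ noedge (Aface F).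
Proof.
case/is_faceP=> H1 H2; split.
  apply/is_faceP; split.
    by move=> W /imsetP [T hT ->]; exact: vert_emb (H1 T hT).
  by move=> W U /imsetP [T1 h1 ->] /imsetP [T2 h2 ->]; rewrite emb_lam; exact: H2.
by apply: noedgeI => W /imsetP [T hT ->]; rewrite (negbTE (top_notin_emb _)).
Qed.

Lemma B_face n (hn : 3 <= n) F : is_face n F -> is_face n.+1 (Bface F) /\ noedge (Bface F).
Proof.
move=> hF; have [hA1 hA2] := A_face hF; case/is_faceP: (hF) => H1 H2.
split; last exact: noedge_ext.
apply: face_ext => //; first exact: vert_v0.
move=> W /imsetP [T hT ->]; apply/or3P; apply: Or32; rewrite emb_sub.
by case/and3P: (H1 T hT).
Qed.

Lemma Q_face n (hn : 3 <= n) G : inQ G -> is_face n.+1 G /\ noedge G.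
Proof.
case=> F [hF [->|[->|[S hS [->|->]]]]].
- exact: A_face.
- exact: B_face.
- exact: C_face.
- exact: D_face.
Qed.

Definition unemb n (W : {set 'I_n.+2}) : {set 'I_n.+1} := [set i | wid i \in W].

Lemma emb_unemb n (W : {set 'I_n.+2}) : emb (unemb W) = W :\ top n.
Proof.
apply/setP=> x; rewrite in_setD1; case: (eqVneq x (top n)) => [->|hx] /=.
  by rewrite (negbTE (top_notin_emb _)).
by case: (wid_surj hx) => i ->; rewrite mem_emb inE.
Qed.

Lemma emb_unemb_nt n (W : {set 'I_n.+2}) : top n \notin W -> emb (unemb W) = W.
Proof.
move=> h; rewrite emb_unemb; apply/setP=> x; rewrite in_setD1.
case: (eqVneq x (top n)) => [->|] //=; by rewrite (negbTE h).
Qed.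

Lemma emb_unemb_t n (W : {set 'I_n.+2}) : top n \in W -> top n |: emb (unemb W) = W.
Proof. by move=> h; rewrite emb_unemb setD1K. Qed.

Lemma sub_tt n (A B : {set 'I_n.+1}) : top n |: emb A \subset top n |: emb B -> A \subset B.
Proof.
move/subsetP=> H; apply/subsetP=> i hi.
have := H (wid i); rewrite !in_setU1 mem_emb hi orbT => /(_ isT).
by rewrite (negbTE (wid_neq_top i)) mem_emb.
Qed.

Lemma sub_et n (A B : {set 'I_n.+1}) : emb A \subset top n |: emb B -> A \subset B.
Proof.
move/subsetP=> H; apply/subsetP=> i hi.
have := H (wid i); rewrite !in_setU1 mem_emb hi => /(_ isT).
by rewrite (negbTE (wid_neq_top i)) mem_emb.
Qed.

Lemma not_sub_te n (A B : {set 'I_n.+1}) : ~~ (top n |: emb A \subset emb B).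
Proof.
apply/negP=> /subsetP /(_ (top n) (setU11 _ _)); by rewrite (negbTE (top_notin_emb _)).
Qed.

Lemma lam_tt n (A B : {set 'I_n.+1}) :
  laminar_pair (top n |: emb A) (top n |: emb B) -> laminar_pair A B.
Proof.
case/or3P=> h.
- by apply/or3P; apply: Or31; exact: sub_tt h.
- by apply/or3P; apply: Or32; exact: sub_tt h.
- by case: (disjP _ _ h (top n) (setU11 _ _) (setU11 _ _)).
Qed.

Lemma lam_te n (A B : {set 'I_n.+1}) :
  laminar_pair (top n |: emb A) (emb B) -> laminar_pair A B.
Proof.
case/or3P=> h.
- by rewrite (negbTE (not_sub_te _ _)) in h.
- by apply/or3P; apply: Or32; exact: sub_et h.
- apply/or3P; apply: Or33; rewrite -emb_disj; exact: disjointWl (sub_top_emb _) h.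
Qed.

Lemma vert_emb_inv n T : is_vertex n.+1 (@emb n T) ->
  [/\ T \subset ground n, 2 <= #|T| & #|T| <= n - 1].
Proof. by case/and3P; rewrite emb_ground_sub emb_card => ? ? ?; split => //; lia. Qed.

Lemma vert_top_inv n T : is_vertex n.+1 (top n |: @emb n T) ->
  T \subset ground n /\ #|T| <= n - 2.
Proof.
case/and3P=> h1 _ h3; rewrite card_top_emb in h3; split; last lia.
by rewrite -emb_ground_sub; apply: subset_trans (sub_top_emb _) h1.
Qed.

Lemma top_card3 n G W : is_face n.+1 G -> noedge G -> W \in G -> top n \in W -> 3 <= #|W|.
Proof.
case/is_faceP=> H1 _ hne hW ht.
case/and3P: (H1 W hW) => hg h2 _.
rewrite ltnNge; apply/negP => h3.
have e := cardsD1 (top n) W; rewrite ht add1n in e.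
have h1 : #|W :\ top n| == 1.
  have : #|W| == 2 by rewrite eqn_leq h3 h2.
  by rewrite e eqSS.
case/cards1P: h1 => i hi.
have hiD : i \in W :\ top n by rewrite hi set11.
move: hiD; rewrite in_setD1 => /andP[hit hiW].
have hWe : W = [set i; top n] by rewrite -(setD1K ht) hi setUC.
have hi2 : 2 <= i by rewrite -mem_ground (subsetP hg).
have hin : i <= n by move: hit (ltn_ord i); rewrite -val_eqE /=; lia.
by have := hne i; rewrite hi2 hin -hWe hW => /(_ isT).
Qed.

Lemma face_inQ_nt n (hn : 3 <= n) G : is_face n.+1 G ->
  (forall W, W \in G -> top n \notin W) -> inQ G.
Proof.
move=> hG hnt; have [H1 H2] := (is_faceP _).1 hG.
have hW : forall W, W \in G -> W = emb (unemb W) by move=> W h; rewrite emb_unemb_nt // hnt.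
pose F := [set T | (emb T \in G) && (T != ground n)].
have hF : is_face n F.
  apply/is_faceP; split.
    move=> T; rewrite inE => /andP[hT hng].
    have [h1 h2 h3] := vert_emb_inv (H1 _ hT).
    apply/and3P; split => //.
    rewrite leqNgt; apply/negP => h4.
    have : T == ground n by rewrite eqEcard h1 card_ground; lia.
    by rewrite (negbTE hng).
  by move=> T U; rewrite !inE => /andP[hT _] /andP[hU _]; rewrite -emb_lam; exact: H2.
exists F; split => //.
have hGF : G :\ v0 n = embF F.
  apply/setP=> W; rewrite in_setD1; apply/idP/imsetP.
    case/andP=> hne hW'; exists (unemb W); last exact: hW.
    rewrite inE -hW // hW' /=; apply/negP=> /eqP he.
    by rewrite (hW W hW') he eqxx in hne.
  case=> T; rewrite inE => /andP[hT hng] ->; rewrite hT andbT /v0.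
  by apply/negP=> /eqP /emb_inj he; rewrite he eqxx in hng.
case: (boolP (v0 n \in G)) => hv.
  by right; left; rewrite /Bface -hGF -/(v0 n) setD1K.
left; rewrite /Aface -hGF; apply/setP=> W; rewrite in_setD1.
by case: (eqVneq W (v0 n)) => [->|] //=; rewrite (negbTE hv).
Qed.

Lemma face_inQ_t n (hn : 3 <= n) G : is_face n.+1 G -> noedge G ->
  forall W0, W0 \in G -> top n \in W0 -> inQ G.
Proof.
move=> hG hne W0 hW0 ht0; have [H1 H2] := (is_faceP _).1 hG.
pose P := fun W : {set 'I_n.+2} => (W \in G) && (top n \in W).
have hP0 : P W0 by rewrite /P hW0 ht0.
case: (arg_minnP (fun W : {set 'I_n.+2} => #|W|) hP0) => W /andP[hW ht] hmin.
have [S hWS] : exists S, W = top n |: emb S by exists (unemb W); rewrite emb_unemb_t.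
have hmin' : forall W', W' \in G -> top n \in W' -> W \subset W'.
  move=> W' hW' ht'.
  have hc : #|W| <= #|W'| by apply: hmin; rewrite /P hW' ht'.
  case/or3P: (H2 _ _ hW hW') => h //.
    have : W' == W by rewrite eqEcard h hc.
    by move/eqP->.
  by case: (disjP _ _ h (top n) ht ht').
have hS : exists s, s \in S.
  apply/card_gt0P; have := top_card3 hG hne hW ht; rewrite hWS card_top_emb; lia.
have [hSg _] : S \subset ground n /\ #|S| <= n - 2.
  by apply: vert_top_inv; rewrite -hWS; exact: H1.
pose F := [set T : {set 'I_n.+1} | ((S \subset T) && (top n |: emb T \in G)) ||
                   (~~ (S \subset T) && (emb T \in G))].
have hGt : forall W', W' \in G -> top n \in W' -> exists2 T : {set 'I_n.+1}, S \subset T & W' = top n |: emb T.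
  move=> W' hW' ht'; exists (unemb W'); last by rewrite emb_unemb_t.
  by apply: sub_tt; rewrite -hWS emb_unemb_t //; exact: hmin'.
have hGn : forall U, U \in G -> top n \notin U -> S \subset unemb U -> U = emb S.
  move=> U hU hnt hSU; have hUe : U = emb (unemb U) by rewrite emb_unemb_nt.
  case/or3P: (H2 _ _ hW hU) => h.
  - by move: h; rewrite hWS {1}hUe (negbTE (not_sub_te _ _)).
  - have h' : unemb U \subset S by apply: sub_et; rewrite -hUe -hWS.
    by rewrite hUe; congr emb; apply/eqP; rewrite eqEsubset h' hSU.
  - case: hS => s hs; case: (disjP _ _ h (wid s)).
      by rewrite hWS setU1r // mem_emb.
    by rewrite hUe mem_emb (subsetP hSU).
have hF : is_face n F.
  apply/is_faceP; split.
    move=> T; rewrite inE => /orP[/andP[hST hT]|/andP[hST hT]].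
      have [h1 h2] := vert_top_inv (H1 _ hT).
      have := top_card3 hG hne hT (setU11 _ _); rewrite card_top_emb => h3.
      by apply/and3P; split => //; lia.
    have [h1 h2 h3] := vert_emb_inv (H1 _ hT).
    apply/and3P; split => //; rewrite leqNgt; apply/negP => h4.
    have : T == ground n by rewrite eqEcard h1 card_ground; lia.
    by move/eqP=> he; rewrite he hSg in hST.
  move=> T1 T2; rewrite !inE => /orP[/andP[hS1 hT1]|/andP[hS1 hT1]]
                                /orP[/andP[hS2 hT2]|/andP[hS2 hT2]].
  - exact: lam_tt (H2 _ _ hT1 hT2).
  - exact: lam_te (H2 _ _ hT1 hT2).
  - by rewrite lam_sym; exact: lam_te (H2 _ _ hT2 hT1).
  - by rewrite -emb_lam; exact: H2.
have hSF : S \in F by rewrite inE subxx -hWS hW.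
exists F; split => //; right; right; exists S => //.
have hC : forall W', W' \in G -> W' != emb S -> W' \in Cface F S.
  move=> W' hW' hne'; rewrite CfaceE; case: (boolP (top n \in W')) => ht'.
    case: (hGt _ hW' ht') => T hST hWe; apply/imsetP; exists T.
      by rewrite inE hST -hWe hW'.
    by rewrite /Xf hST.
  have hUe : W' = emb (unemb W') by rewrite emb_unemb_nt.
  case: (boolP (S \subset unemb W')) => h.
    by rewrite (hGn _ hW' ht' h) eqxx in hne'.
  apply/imsetP; exists (unemb W').
    by rewrite inE (negbTE h) /= -hUe hW'.
  by rewrite /Xf (negbTE h).
have hCsub : forall W', W' \in Cface F S -> W' \in G.
  move=> W'; rewrite CfaceE => /imsetP [T]; rewrite inE /Xf.
  by case/orP=> /andP[hST hT] ->; rewrite ?hST ?(negbTE hST).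
case: (boolP (emb S \in G)) => hSG.
  right; apply/setP => W'; rewrite /Dface in_setU1; apply/idP/idP.
    by move=> hW'; case: eqP => //= /eqP hne'; apply: hC.
  by case/orP=> [/eqP->|]; [|exact: hCsub].
left; apply/setP => W'; apply/idP/idP; last exact: hCsub.
move=> hW'; apply: hC => //; apply/negP=> /eqP he; by rewrite -he hW' in hSG.
Qed.

Lemma charQ n (hn : 3 <= n) (G : {set {set 'I_n.+2}}) :
  inQ G <-> is_face n.+1 G /\ noedge G.
Proof.
split; first exact: Q_face.
case=> hG hne; case: (pickP (fun W => (W \in G) && (top n \in W))) => [W /andP[hW ht]|h].
  exact: face_inQ_t hG hne W hW ht.
apply: face_inQ_nt => // W hW; apply/negP => ht; by have := h W; rewrite hW ht.
Qed.

Lemma top_notin_v0 n : top n \notin v0 n.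
Proof. exact: top_notin_emb. Qed.

Lemma sub_v0 n (v : {set 'I_n.+2}) : is_vertex n.+1 v -> top n \notin v -> v \subset v0 n.
Proof.
move=> hv ht; rewrite -(emb_unemb_nt ht) in hv *.
by case: (vert_emb_inv hv) => h _ _; rewrite /v0 emb_sub.
Qed.

Lemma vert_D1 n G w : is_face n.+1 G -> noedge G -> w \in G -> top n \in w ->
  is_vertex n.+1 (w :\ top n) /\ w :\ top n \subset v0 n.
Proof.
move=> hG hne hw ht; have h3 := top_card3 hG hne hw ht.
have hv := (proj1 ((is_faceP _).1 hG)) w hw.
rewrite -(emb_unemb_t ht) in hv h3; rewrite -emb_unemb.
case: (vert_top_inv hv) => h1 h2; rewrite card_top_emb in h3.
split; last by rewrite /v0 emb_sub.
by apply: vert_emb; apply/and3P; split => //; lia.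
Qed.

Lemma supp_face n (hn : 3 <= n) (G G' : {set {set 'I_n.+2}}) (pos lt1 : nat -> bool) (mp : bool) :
  is_face n.+1 G -> noedge G ->
  (forall a b, pos a -> lt1 b -> a <= b) ->
  (mp -> forall k, k <= n - 1 -> ~~ lt1 k) ->
  (forall v, v \in G' -> (mp /\ v = v0 n) \/ (v \in G /\ (top n \in v -> lt1 #|v|)) \/
      (exists2 w, w \in G & [/\ top n \in w, v = w :\ top n & pos #|w|])) ->
  is_face n.+1 G' /\ noedge G'.
Proof.
move=> hG hne hpl hmp hG'; have [H1 H2] := (is_faceP _).1 hG.
have hcard : forall w, w \in G -> #|w| <= n - 1.
  by move=> w hw; case/and3P: (H1 w hw) => _ _ h; lia.
split; last first.
  move=> i hi; apply/negP=> hv.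
  have ht : top n \in [set i; top n] by rewrite !inE eqxx orbT.
  case: (hG' _ hv) => [[_ he]|[[hv' _]|[w hw [_ he _]]]].
  - by move: ht; rewrite he (negbTE (top_notin_v0 n)).
  - by rewrite (negbTE (hne i hi)) in hv'.
  - by move: ht; rewrite he setD11.
apply/is_faceP; split.
  move=> v /hG' [[_ ->]|[[hv _]|[w hw [ht -> _]]]].
  - exact: vert_v0.
  - exact: H1.
  - by case: (vert_D1 hG hne hw ht).
have Lab : forall u, mp -> u \in G -> (top n \in u -> lt1 #|u|) -> laminar_pair (v0 n) u.
  move=> u hm hu hl; case: (boolP (top n \in u)) => htu.
    by have := hmp hm _ (hcard u hu); rewrite (hl htu).
  by apply/or3P; apply: Or32; apply: sub_v0 => //; exact: H1.
have Lac : forall w, w \in G -> top n \in w -> laminar_pair (v0 n) (w :\ top n).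
  move=> w hw ht; apply/or3P; apply: Or32; by case: (vert_D1 hG hne hw ht).
have Lbc : forall u w, u \in G -> (top n \in u -> lt1 #|u|) -> w \in G -> top n \in w -> pos #|w| ->
    laminar_pair u (w :\ top n).
  move=> u w hu hl hw ht hp; case/or3P: (H2 _ _ hu hw) => h.
  - case: (boolP (top n \in u)) => htu.
      have hc : #|w| <= #|u| by apply: hpl hp (hl htu).
      have : u == w by rewrite eqEcard h hc.
      move/eqP=> ->; apply/or3P; apply: Or32; exact: subD1set.
    apply/or3P; apply: Or31; apply/subsetP=> x hx; rewrite in_setD1 (subsetP h) // andbT.
    by apply/negP=> /eqP he; rewrite -he hx in htu.
  - by apply/or3P; apply: Or32; exact: subset_trans (subD1set _ _) h.
  - by apply/or3P; apply: Or33; exact: disjointWr (subD1set _ _) h.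
have Lcc : forall w1 w2, w1 \in G -> top n \in w1 -> w2 \in G -> top n \in w2 ->
    laminar_pair (w1 :\ top n) (w2 :\ top n).
  move=> w1 w2 h1 t1 h2 t2; case/or3P: (H2 _ _ h1 h2) => h.
  - by apply/or3P; apply: Or31; exact: setSD.
  - by apply/or3P; apply: Or32; exact: setSD.
  - by case: (disjP _ _ h (top n) t1 t2).
move=> u v /hG' [[hm ->]|[[hu hlu]|[w hw [ht -> hp]]]] /hG' [[hm' ->]|[[hv hlv]|[w' hw' [ht' -> hp']]]].
- by rewrite /laminar_pair subxx.
- exact: Lab.
- exact: Lac.
- by rewrite lam_sym; exact: Lab.
- exact: H2.
- exact: Lbc.
- by rewrite lam_sym; exact: Lac.
- by rewrite lam_sym; exact: Lbc.
- exact: Lcc.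
Qed.
Local Open Scope ring_scope.
Notation RR := Rdefinitions.R.

Definition clamp (a : RR) : RR := if a <= 0 then 0 else if 1 <= a then 1 else a.

Lemma clamp_ge0 a : 0 <= clamp a.
Proof. rewrite /clamp; case: ifP => h1; [lra|case: ifP => h2; lra]. Qed.
Lemma clamp_le1 a : clamp a <= 1.
Proof. rewrite /clamp; case: ifP => h1; [lra|case: ifP => h2; lra]. Qed.
Lemma clamp0 a : a <= 0 -> clamp a = 0.
Proof. by rewrite /clamp => ->. Qed.
Lemma clamp1 a : 1 <= a -> clamp a = 1.
Proof. rewrite /clamp => h; case: ifP => h1 //; [lra| by rewrite h]. Qed.
Lemma clamp_pos a : 0 < clamp a -> 0 < a.
Proof. rewrite /clamp; case: ifP => h1; [lra|case: ifP => h2; lra]. Qed.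
Lemma clamp_lt1 a : clamp a < 1 -> a < 1.
Proof. rewrite /clamp; case: ifP => h1; [lra|case: ifP => h2; lra]. Qed.
Lemma clamp_lip a b : `|clamp a - clamp b| <= `|a - b|.
Proof.
rewrite /clamp; case: ifP => h1; case: ifP => h2; try case: ifP => h3; try case: ifP => h4;
 case: (lerP 0 (a - b)) => hab; rewrite ?(ger0_norm hab) ?(ltr0_norm hab);
 rewrite ?ler_norml; try (apply/andP; split); lra.
Qed.

Lemma prod_lip (p q r u : RR) : 0 <= p <= 1 -> 0 <= q <= 1 -> 0 <= r <= 1 -> 0 <= u <= 1 ->
  `|p*q - r*u| <= `|p - r| + `|q - u|.
Proof.
move=> /andP[? ?] /andP[? ?] /andP[? ?] /andP[? ?].
case: (lerP 0 (p - r)) => h1; case: (lerP 0 (q - u)) => h2; case: (lerP 0 (p*q - r*u)) => h3;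
rewrite ?(ger0_norm h1) ?(ltr0_norm h1) ?(ger0_norm h2) ?(ltr0_norm h2) ?(ger0_norm h3) ?(ltr0_norm h3); nra.
Qed.

Definition lam n (t : RR) (k : nat) : RR := clamp (n.+1%:R * t - k%:R).
Definition mu n (t : RR) : RR := clamp (n.+1%:R * t - n%:R).

Lemma lam_01 n t k : 0 <= lam n t k <= 1.
Proof. by rewrite clamp_ge0 clamp_le1. Qed.
Lemma mu_01 n t : 0 <= mu n t <= 1.
Proof. by rewrite clamp_ge0 clamp_le1. Qed.

Lemma lam0 n k : lam n 0 k = 0.
Proof. by apply: clamp0; rewrite mulr0 sub0r oppr_le0 ler0n. Qed.
Lemma mu0 n : mu n 0 = 0.
Proof. by apply: clamp0; rewrite mulr0 sub0r oppr_le0 ler0n. Qed.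
Lemma mu1 n : mu n 1 = 1.
Proof. by apply: clamp1; rewrite mulr1 -natrB // subSnn. Qed.

Lemma lam_order n t a b : 0 < lam n t a -> lam n t b < 1 -> (a <= b)%N.
Proof.
move=> /clamp_pos h1 /clamp_lt1 h2.
have : (a%:R : RR) < b.+1%:R by rewrite -addn1 natrD; lra.
by rewrite ltr_nat ltnS.
Qed.

Lemma mu_lam n t k : (1 <= n)%N -> 0 < mu n t -> (k <= n - 1)%N -> lam n t k = 1.
Proof.
move=> hn /clamp_pos h hk; apply: clamp1.
have : ((k + 1)%N%:R : RR) <= n%:R by rewrite ler_nat; lia.
rewrite natrD; lra.
Qed.

Lemma lin_lip n (s t : RR) (k : nat) :
  `|(n.+1%:R * s - k%:R) - (n.+1%:R * t - k%:R)| = n.+1%:R * `|s - t|.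
Proof.
have -> : (n.+1%:R * s - k%:R) - (n.+1%:R * t - k%:R) = n.+1%:R * (s - t) by ring.
by rewrite normrM ger0_norm ?ler0n.
Qed.

Lemma lam_lip n s t k : `|lam n s k - lam n t k| <= n.+1%:R * `|s - t|.
Proof. by rewrite -(lin_lip n s t k); apply: clamp_lip. Qed.
Lemma mu_lip n s t : `|mu n s - mu n t| <= n.+1%:R * `|s - t|.
Proof. by rewrite -(lin_lip n s t n); apply: clamp_lip. Qed.

Definition Ap (a b c : bool) (l : RR) : RR := a%:R * (1 - b%:R * l) + (b && c)%:R * l.

Lemma Ap_01 a b c l : 0 <= l <= 1 -> 0 <= Ap a b c l <= 1.
Proof.
move=> /andP[h1 h2]; rewrite /Ap.
by case: a; case: b; case: c; rewrite /= ?mul1r ?mul0r ?add0r ?addr0 ?subr0; apply/andP; split; lra.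
Qed.

Lemma Ap_lip a b c l l' : `|Ap a b c l - Ap a b c l'| <= `|l - l'|.
Proof.
have -> : Ap a b c l - Ap a b c l' = ((b && c)%:R - a%:R * b%:R) * (l - l') by rewrite /Ap; ring.
rewrite normrM; apply: ler_piMl; first exact: normr_ge0.
by case: a; case: b; case: c; rewrite /= ?mul1r ?mul0r ?subr0 ?subrr ?normr0 ?normrN ?normr1 ?sub0r ?normrN ?normr1.
Qed.

Lemma sum_ind (T : finType) (a : T) (c : RR) : \sum_(v : T) (v == a)%:R * c = c.
Proof.
rewrite (bigD1 a) //= eqxx mul1r big1 ?addr0 // => v /negbTE ->; by rewrite mul0r.
Qed.

Lemma sum_ind_b (T : finType) (b : bool) (a : T) (c : RR) :
  \sum_(v : T) (b && (v == a))%:R * c = b%:R * c.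
Proof. case: b => /=; first by rewrite mul1r sum_ind. by rewrite mul0r big1 // => v _; rewrite mul0r. Qed.

Lemma sum_ind' (T : finType) (a : T) (f : T -> RR) : \sum_(w : T) (a == w)%:R * f w = f a.
Proof.
rewrite (bigD1 a) //= eqxx mul1r big1 ?addr0 // => v; rewrite eq_sym => /negbTE ->; by rewrite mul0r.
Qed.

Lemma sum_Ap (T : finType) (w w' : T) b l : \sum_(v : T) Ap (v == w) b (v == w') l = 1.
Proof. rewrite /Ap big_split /=. rewrite sum_ind sum_ind_b; ring. Qed.

Definition Kc n (t : RR) (v w : {set 'I_n.+2}) : RR :=
  (1 - mu n t) * Ap (v == w) (top n \in w) (v == w :\ top n) (lam n t #|w|).
Arguments Kc : clear implicits.

Definition Hm n (x : {set 'I_n.+2} -> RR) (t : RR) (v : {set 'I_n.+2}) : RR :=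
  \sum_(w : {set 'I_n.+2}) Kc n t v w * x w + mu n t * (v == v0 n)%:R.
Arguments Hm : clear implicits.

Lemma Kc_01 n t v w : 0 <= Kc n t v w <= 1.
Proof.
rewrite /Kc; have /andP[h1 h2] := mu_01 n t.
have /andP[h3 h4] := Ap_01 (v == w) (top n \in w) (v == w :\ top n) (lam_01 n t #|w|).
apply/andP; split; nra.
Qed.

Lemma Kc_lip n s t v w : `|Kc n s v w - Kc n t v w| <= 2 * n.+1%:R * `|s - t|.
Proof.
rewrite /Kc; have hm := mu_01 n s; have hm' := mu_01 n t.
apply: le_trans (prod_lip _ _ _ _) _.
- by move: hm => /andP[? ?]; apply/andP; split; lra.
- exact: Ap_01 (lam_01 _ _ _).
- by move: hm' => /andP[? ?]; apply/andP; split; lra.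
- exact: Ap_01 (lam_01 _ _ _).
have -> : 1 - mu n s - (1 - mu n t) = - (mu n s - mu n t) by ring.
rewrite normrN; have := mu_lip n s t; have := Ap_lip (v == w) (top n \in w) (v == w :\ top n) (lam n s #|w|) (lam n t #|w|).
have := lam_lip n s t #|w|; lra.
Qed.

Lemma sumK n t w : \sum_(v : {set 'I_n.+2}) Kc n t v w = 1 - mu n t.
Proof. by rewrite /Kc -big_distrr /= sum_Ap mulr1. Qed.

Lemma Ap_nz a b c l : Ap a b c l != 0 -> 0 <= l <= 1 ->
  (a /\ (b -> l < 1)) \/ (b /\ c /\ 0 < l).
Proof.
rewrite /Ap => h /andP[h1 h2]; case: (ltrP l 1) => hl.
  case: a h => h; first by left.
  case: b h => h; case: c h => h /=; rewrite ?mul0r ?mul1r ?add0r ?eqxx // in h.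
  by right; split => //; split => //; rewrite lt_def h h1.
have e1 : l = 1 by apply/eqP; rewrite eq_le h2 hl.
subst l; case: a h => h.
  case: b h => h; last by left.
  case: c h => h; first by right; split=> //; split => //; lra.
  by exfalso; move/eqP: h; apply; rewrite /=; ring.
case: b h => h; case: c h => h /=; rewrite ?mul0r ?mul1r ?add0r ?eqxx // in h.
by right; split => //; split => //; lra.
Qed.

Definition x0 n (v : {set 'I_n.+2}) : RR := (v == v0 n)%:R.
Arguments x0 : clear implicits.

Lemma real_x0 n (hn : (3 <= n)%N) : realization (@inQ n) (x0 n).
Proof.
split; first by move=> v; rewrite /x0 ler0n.
split.
  rewrite -[RHS](sum_ind (v0 n) 1); apply: eq_bigr => v _; by rewrite mulr1.
have -> : [set v | x0 n v != 0] = [set v0 n].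
  apply/setP=> v; rewrite !inE /x0; by case: (v == v0 n); rewrite pnatr_eq0.
apply/charQ => //; split.
  apply/is_faceP; split; first by move=> S; rewrite inE => /eqP ->; exact: vert_v0.
  by move=> S U; rewrite !inE => /eqP -> /eqP ->; rewrite /laminar_pair subxx.
move=> i hi; rewrite inE; apply/negP => /eqP he.
have : top n \in [set i; top n] by rewrite !inE eqxx orbT.
by rewrite he (negbTE (top_notin_v0 n)).
Qed.

Lemma Kc_t0 n v w : Kc n 0 v w = (v == w)%:R.
Proof. by rewrite /Kc /Ap mu0 lam0 subr0 mul1r !mulr0 subr0 mulr1 addr0. Qed.

Lemma Hm0 n x : Hm n x 0 = x.
Proof.
apply: functional_extensionality => v; rewrite /Hm mu0 mul0r addr0.
rewrite -[RHS](sum_ind' v x); apply: eq_bigr => w _; by rewrite Kc_t0.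
Qed.

Lemma Hm1 n x : Hm n x 1 = x0 n.
Proof.
apply: functional_extensionality => v; rewrite /Hm mu1 mul1r big1 ?add0r // => w _.
by rewrite /Kc mu1 subrr !mul0r.
Qed.

Lemma Hm_ge0 n x t v : (forall w, 0 <= x w) -> 0 <= Hm n x t v.
Proof.
move=> hx; rewrite /Hm; apply: addr_ge0.
  apply: sumr_ge0 => w _; apply: mulr_ge0 => //; by case/andP: (Kc_01 t v w).
by apply: mulr_ge0; [case/andP: (mu_01 n t)| exact: ler0n].
Qed.

Lemma Hm_sum n x t : \sum_w x w = 1 -> \sum_v Hm n x t v = 1.
Proof.
move=> hs; rewrite /Hm big_split /= exchange_big /=.
have -> : \sum_v mu n t * (v == v0 n)%:R = mu n t.
  by rewrite -[RHS](sum_ind (v0 n) (mu n t)); apply: eq_bigr => v _; rewrite mulrC.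
have -> : \sum_w \sum_v Kc n t v w * x w = \sum_w (1 - mu n t) * x w.
  by apply: eq_bigr => w _; rewrite -big_distrl /= sumK.
by rewrite -big_distrr /= hs; ring.
Qed.

Lemma Hm_supp n (x : {set 'I_n.+2} -> RR) t v : Hm n x t v != 0 ->
  (0 < mu n t /\ v = v0 n) \/ (x v != 0 /\ (top n \in v -> lam n t #|v| < 1)) \/
  (exists2 w, x w != 0 & [/\ top n \in w, v = w :\ top n & 0 < lam n t #|w|]).
Proof.
rewrite /Hm; case: (eqVneq (mu n t * (v == v0 n)%:R) 0) => hm.
  rewrite hm addr0 => hs.
  case: (pickP (fun w => Kc n t v w * x w != 0)) => [w hw | h]; last first.
    by exfalso; move/eqP: hs; apply; apply: big1 => w _; have := h w; move/negbFE/eqP.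
  move: hw; rewrite mulf_eq0 negb_or => /andP[hK hx].
  move: hK; rewrite /Kc mulf_eq0 negb_or => /andP[_ hA].
  case: (Ap_nz hA (lam_01 n t #|w|)) => [[/eqP e hl]|[hb [/eqP -> hl]]].
    by subst w; right; left; split.
  by right; right; exists w => //; split.
left; move: hm; rewrite mulf_eq0 negb_or => /andP[h1 h2].
split; first by rewrite lt_def h1; case/andP: (mu_01 n t).
by move: h2; case: (eqVneq v (v0 n)) => //= _; rewrite ?pnatr_eq0 eqxx.
Qed.

Lemma Hm_real n (hn : (3 <= n)%N) x t : realization (@inQ n) x -> realization (@inQ n) (Hm n x t).
Proof.
case=> hx [hs hQ]; split; first by move=> v; exact: Hm_ge0.
split; first exact: Hm_sum.
move/(charQ hn): hQ => [hG hne].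
apply/(charQ hn).
apply: (@supp_face n hn [set v | x v != 0] _ (fun k => 0 < lam n t k) (fun k => lam n t k < 1) (0 < mu n t)) => //.
- by move=> a b; exact: lam_order.
- by move=> hm k hk; rewrite (mu_lam (k:=k) _ hm) ?ltxx //; lia.
move=> v; rewrite inE => /Hm_supp [[-> ->]|[[h1 h2]|[w h1 h2]]].
- by left.
- by right; left; rewrite inE h1.
- by right; right; exists w; rewrite ?inE.
Qed.

Lemma Hm_cont n (x : {set 'I_n.+2} -> RR) t (e : RR) :
  (forall w, 0 <= x w) -> \sum_w x w = 1 -> 0 < e ->
  exists2 d : RR, 0 < d & forall y s, (forall v, `|y v - x v| < d) -> `|s - t| < d ->
    forall v, `|Hm n y s v - Hm n x t v| < e.
Proof.
move=> hx hs he.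
pose N : RR := #|{set 'I_n.+2}|%:R.
pose L : RR := n.+1%:R.
have hN : 0 <= N by rewrite /N ler0n.
have hL : 0 <= L by rewrite /L ler0n.
pose M := N + 3 * L + 1.
have hM : 0 < M by rewrite /M; lra.
have hd : 0 < e / M by apply: divr_gt0.
exists (e / M) => // y s hy hst v.
have hdM : e / M * M = e by rewrite divfK // gt_eqF.
move: hd hdM hy hst; set d := e / M => hd hdM hy hst.
have key : forall w, `|Kc n s v w * y w - Kc n t v w * x w| <= d + 2 * L * d * x w.
  move=> w.
  have -> : Kc n s v w * y w - Kc n t v w * x w =
            Kc n s v w * (y w - x w) + (Kc n s v w - Kc n t v w) * x w by ring.
  apply: le_trans (ler_normD _ _) _.
  rewrite (normrM (Kc n s v w)) (normrM (Kc n s v w - Kc n t v w)) (ger0_norm (hx w)).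
  have /andP[k1 k2] := Kc_01 s v w.
  rewrite (ger0_norm k1).
  have h1 := hy w; have h2 := Kc_lip s t v w; have h3 : `|s - t| <= d by apply: ltW.
  have h4 := normr_ge0 (y w - x w); have h5 := normr_ge0 (Kc n s v w - Kc n t v w).
  have h6 := hx w; have h7 := normr_ge0 (s - t).
  rewrite -/L in h2.
  apply: lerD; first nra.
  have : `|Kc n s v w - Kc n t v w| <= 2 * L * d by nra.
  move=> h8; nra.
rewrite /Hm.
have -> : (\sum_w Kc n s v w * y w + mu n s * (v == v0 n)%:R) -
          (\sum_w Kc n t v w * x w + mu n t * (v == v0 n)%:R) =
          \sum_w (Kc n s v w * y w - Kc n t v w * x w) + (mu n s - mu n t) * (v == v0 n)%:R.
  by rewrite sumrB; ring.
apply: le_lt_trans (ler_normD _ _) _.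
have hsum : `|\sum_w (Kc n s v w * y w - Kc n t v w * x w)| <= N * d + 2 * L * d.
  apply: le_trans (ler_norm_sum _ _ _) _.
  apply: le_trans (ler_sum _ (fun w _ => key w)) _.
  rewrite big_split /= sumr_const -mulr_natl -big_distrr /= hs mulr1 /N.
  rewrite -[d *+ _]mulr_natl ?mulr1; exact: lexx.
have hmu : `|(mu n s - mu n t) * (v == v0 n)%:R| <= L * d.
  rewrite normrM; have h1 := mu_lip n s t; rewrite -/L in h1.
  have h2 : `|(v == v0 n)%:R : RR| <= 1 by case: (v == v0 n); rewrite /= ?normr1 ?normr0.
  have h3 : `|s - t| <= d by apply: ltW.
  have := normr_ge0 (mu n s - mu n t); have := normr_ge0 ((v == v0 n)%:R : RR);
  have := normr_ge0 (s - t); nra.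
rewrite -hdM /M; nra.
Qed.

Local Close Scope ring_scope.

Theorem mainTheorem11 (n : nat) (hn : 3 <= n) :
  subcomplex (@inQ n) (fun G => is_face n.+1 G) /\
  (forall G : {set {set 'I_n.+2}},
     inQ G <->
     (is_face n.+1 G /\
      forall i : 'I_n.+2, 2 <= i <= n -> [set i; top n] \notin G)) /\
  contractible (realization (@inQ n)).
Proof.
split.
  split; first by move=> G /(charQ hn) [].
  move=> G H /(charQ hn) [hG hne] hHG; apply/(charQ hn); split.
    case/is_faceP: hG => H1 H2; apply/is_faceP; split.
      by move=> S hS; apply: H1; exact: (subsetP hHG).
    by move=> S U hS hU; apply: H2; exact: (subsetP hHG).
  by move=> i hi; apply/negP => /(subsetP hHG); apply/negP; exact: hne.
split; first by move=> G; exact: (charQ hn).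
exists (x0 n), (Hm n); split; first exact: real_x0.
split; first by move=> x t hx _; exact: Hm_real.
split; first by move=> x _; rewrite Hm0 Hm1.
move=> x t [hx [hs _]] _ e he.
have [d hd H] := Hm_cont t hx hs he.
by exists d => // y s _ _; exact: H.
Qed.
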